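(* Let $\preceq$ be a partial order on a nonempty set $S_0$, let $n \ge 1$, and let $S = S_0^n$ carry the component-wise partial order ($a \preceq b$ iff $a_i \preceq b_i$ for all $i$). Let $\mathcal{G}$ be a subgroup of the symmetric group $\mathcal{S}_n$, acting on $S$ by permuting coordinates, $\sigma a = (a_{\sigma(i)})_{i}$. Then on the set $S/\mathcal{G}$ of orbits, the strong relation ($A \preceq B$ iff for all $a \in A$ there is $b \in B$ with $a \preceq b$) and the weak relation ($A \preceq B$ iff there exist $a \in A$, $b \in B$ with $a \preceq b$) are identical, and this relation is a partial order on $S/\mathcal{G}$. *)

(* Defs.v *)
From mathcomp Require Import all_boot all_fingroup.
Set Implicit Arguments. Unset Strict Implicit. Unset Printing Implicit Defensive.

Definition partial_order (T : Type) (le : T -> T -> Prop) : Prop :=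
  (forall x, le x x) /\
  (forall x y z, le x y -> le y z -> le x z) /\
  (forall x y, le x y -> le y x -> x = y).

Definition cw_le (T : Type) (le : T -> T -> Prop) (n : nat)
  (a b : 'I_n -> T) : Prop := forall i, le (a i) (b i).

Definition pact (n : nat) (T : Type) (s : 'S_n) (a : 'I_n -> T) : 'I_n -> T :=
  fun i => a (s i).

Definition orbitG (n : nat) (T : Type) (G : {set 'S_n}) (a : 'I_n -> T)
  : ('I_n -> T) -> Prop :=
  fun b => exists2 s, s \in G & b = pact s a.

Definition is_orbit (n : nat) (T : Type) (G : {set 'S_n})
  (A : ('I_n -> T) -> Prop) : Prop :=
  exists a, A = orbitG G a.

Definition strong_rel (U : Type) (le : U -> U -> Prop) (A B : U -> Prop) : Prop :=
  forall a, A a -> exists2 b, B b & le a b.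

Definition weak_rel (U : Type) (le : U -> U -> Prop) (A B : U -> Prop) : Prop :=
  exists a b, [/\ A a, B b & le a b].

(* Main.v *)
Require Import Defs.
From mathcomp Require Import all_boot all_fingroup.
From Stdlib Require Import FunctionalExtensionality PropExtensionality.

Section Aux.
Variables (S0 : Type) (le : S0 -> S0 -> Prop) (Hpo : partial_order le) (n : nat).

Lemma pactM (s t : 'S_n) (a : 'I_n -> S0) : pact s (pact t a) = pact (s * t)%g a.
Proof. apply: functional_extensionality => i; by rewrite /pact permM. Qed.

Lemma pact1 (a : 'I_n -> S0) : pact 1%g a = a.
Proof. apply: functional_extensionality => i; by rewrite /pact perm1. Qed.

Lemma cw_pact (s : 'S_n) (a b : 'I_n -> S0) :
  cw_le le a b -> cw_le le (pact s a) (pact s b).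
Proof. by move=> H i; apply: H. Qed.

Lemma cw_refl (a : 'I_n -> S0) : cw_le le a a.
Proof. move=> i; case: Hpo => [R _]; exact: R. Qed.

Lemma cw_trans (a b c : 'I_n -> S0) : cw_le le a b -> cw_le le b c -> cw_le le a c.
Proof. move=> H1 H2 i; case: Hpo => [_ [T _]]; exact: T (H1 i) (H2 i). Qed.

Lemma cw_anti (a b : 'I_n -> S0) : cw_le le a b -> cw_le le b a -> a = b.
Proof.
move=> H1 H2; apply: functional_extensionality => i.
case: Hpo => [_ [_ A]]; exact: A (H1 i) (H2 i).
Qed.

Lemma orbit_pact (G : {group 'S_n}) (b : 'I_n -> S0) (s : 'S_n) :
  s \in G -> orbitG G (pact s b) = orbitG G b.
Proof.
move=> sG; apply: functional_extensionality => x; apply: propositional_extensionality.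
split=> [[t tG ->]|[t tG ->]].
  by exists (t * s)%g; [exact: groupM | rewrite pactM].
exists (t * s^-1)%g; first by rewrite groupM // groupV.
by rewrite pactM -mulgA mulVg mulg1.
Qed.

Lemma fix_le (u : 'S_n) (a : 'I_n -> S0) :
  cw_le le a (pact u a) -> pact u a = a.
Proof.
move=> H.
have step k : cw_le le (pact (u ^+ k)%g a) (pact (u ^+ k.+1)%g a).
  by rewrite expgSr -pactM; apply: cw_pact.
have chain m : cw_le le (pact u a) (pact (u ^+ m.+1)%g a).
  elim: m => [|m IH]; first by rewrite expg1; apply: cw_refl.
  exact: cw_trans IH (step _).
apply: cw_anti => //.
have := chain (#[u]%g).-1; rewrite prednK ?order_gt0 // expg_order pact1 //.
Qed.

End Aux.

Theorem corollary3 (S0 : Type) (le : S0 -> S0 -> Prop)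
  (Hpo : partial_order le) (Hne : inhabited S0)
  (n : nat) (Hn : 0 < n) (G : {group 'S_n}) :
  (forall A B : ('I_n -> S0) -> Prop, is_orbit G A -> is_orbit G B ->
     (strong_rel (@cw_le S0 le n) A B <-> weak_rel (@cw_le S0 le n) A B)) /\
  (forall A, is_orbit G A -> weak_rel (@cw_le S0 le n) A A) /\
  (forall A B C, is_orbit G A -> is_orbit G B -> is_orbit G C ->
     weak_rel (@cw_le S0 le n) A B -> weak_rel (@cw_le S0 le n) B C ->
     weak_rel (@cw_le S0 le n) A C) /\
  (forall A B, is_orbit G A -> is_orbit G B ->
     weak_rel (@cw_le S0 le n) A B -> weak_rel (@cw_le S0 le n) B A -> A = B).
Proof.
have inorb (a : 'I_n -> S0) : orbitG G a a.
  by exists 1%g; [exact: group1 | rewrite pact1].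
have SW A B : is_orbit G A -> is_orbit G B ->
    (strong_rel (@cw_le S0 le n) A B <-> weak_rel (@cw_le S0 le n) A B).
  move=> [a ->] [b ->]; split.
    move=> H; have [b' Hb' Hle] := H a (inorb a).
    by exists a, b'; split.
  move=> [a1 [b1 [[s sG ->] [t tG ->] Hle]]] x [r rG ->].
  exists (pact ((r * s^-1) * t)%g b).
    by exists ((r * s^-1) * t)%g => //; rewrite !groupM // groupV.
  have := @cw_pact S0 le n (r * s^-1)%g _ _ Hle; rewrite !pactM -[X in pact X a]mulgA mulVg mulg1; apply.
split; first exact: SW.
split.
  move=> A [a ->]; exists a, a; split; [exact: inorb|exact: inorb|exact: (@cw_refl S0 le Hpo n)].
split.
  move=> A B C oA oB oC /(SW _ _ oA oB) H1 /(SW _ _ oB oC) H2.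
  apply/(SW _ _ oA oC) => x Ax.
  have [y By Hxy] := H1 x Ax; have [z Cz Hyz] := H2 y By.
  by exists z => //; exact: (@cw_trans S0 le Hpo n _ _ _ Hxy Hyz).
move=> A B oA oB /(SW _ _ oA oB) H1 /(SW _ _ oB oA) H2.
case: (oA) => a EA; case: (oB) => b0 EB.
have Aa : A a by rewrite EA; exact: inorb.
have [b Bb Hab] := H1 a Aa.
have [a' Aa' Hba] := H2 b Bb.
move: (Aa'); rewrite EA => -[u uG Ea'].
have Hu : cw_le le a (pact u a) by rewrite -Ea'; exact: (@cw_trans S0 le Hpo n _ _ _ Hab Hba).
have Efix := @fix_le S0 le Hpo n u a Hu.
have Eab : a = b by apply: (@cw_anti S0 le Hpo n) => //; rewrite -Efix -Ea'.
move: Bb; rewrite EB => -[t tG Eb].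
by rewrite Eab Eb orbit_pact.
Qed.
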